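(* If $f_i=h_i+\overline{g_i}\in S_H$ with $h_i(z)+g_i(z)=\dfrac{z}{1-z}$ for $i=1,2$, then for every $0\le t\le1$ the map $f=tf_1+(1-t)f_2$ belongs to $S_H$ and maps $E$ onto a domain convex in the direction of the imaginary axis.
   Context: $E=\{z\in\mathbb{C}:|z|<1\}$. $S_H$ denotes the class of harmonic, univalent, sense-preserving mappings $f=h+\overline{g}$ of $E$ ($h,g$ analytic, $h'\ne0$, $|g'/h'|<1$) normalized by $f(0)=0$, $f_z(0)=1$. A domain $\Omega$ is convex in the direction of the imaginary axis if every line parallel to the imaginary axis has connected or empty intersection with $\Omega$. *)

(* Defs.v *)
From Stdlib Require Import Reals Lra.
Open Scope R_scope.

Definition Cpx : Type := (R * R)%type.
Definition Re (z : Cpx) : R := fst z.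
Definition Im (z : Cpx) : R := snd z.
Definition RtoC (x : R) : Cpx := (x, 0).
Definition Czero : Cpx := (0, 0).
Definition Cone : Cpx := (1, 0).
Definition Cadd (z w : Cpx) : Cpx := (fst z + fst w, snd z + snd w).
Definition Copp (z : Cpx) : Cpx := (- fst z, - snd z).
Definition Csub (z w : Cpx) : Cpx := Cadd z (Copp w).
Definition Cmul (z w : Cpx) : Cpx :=
  (fst z * fst w - snd z * snd w, fst z * snd w + snd z * fst w).
Definition Cconj (z : Cpx) : Cpx := (fst z, - snd z).
Definition Cnorm (z : Cpx) : R := sqrt (fst z * fst z + snd z * snd z).
Definition Cinv (z : Cpx) : Cpx :=
  let d := fst z * fst z + snd z * snd z in (fst z / d, - snd z / d).
Definition Cdiv (z w : Cpx) : Cpx := Cmul z (Cinv w).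

Definition inE (z : Cpx) : Prop := Cnorm z < 1.

Definition Cderiv_at (f : Cpx -> Cpx) (z l : Cpx) : Prop :=
  forall eps : R, 0 < eps -> exists delta : R, 0 < delta /\
    forall w : Cpx, 0 < Cnorm (Csub w z) < delta ->
      Cnorm (Csub (Cdiv (Csub (f w) (f z)) (Csub w z)) l) < eps.

(* Data (h, g) of a mapping f = h + conj g in S_H:
   h, g analytic in E (with derivatives h', g'), h' <> 0, |g'/h'| < 1,
   f univalent in E, f(0) = 0, f_z(0) = h'(0) = 1. *)
Definition SH_data (h g : Cpx -> Cpx) : Prop :=
  exists h' g' : Cpx -> Cpx,
    (forall z, inE z -> Cderiv_at h z (h' z) /\ Cderiv_at g z (g' z)) /\
    (forall z, inE z -> h' z <> Czero /\ Cnorm (Cdiv (g' z) (h' z)) < 1) /\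
    (forall z w, inE z -> inE w ->
       Cadd (h z) (Cconj (g z)) = Cadd (h w) (Cconj (g w)) -> z = w) /\
    Cadd (h Czero) (Cconj (g Czero)) = Czero /\
    h' Czero = Cone.

Definition in_SH (f : Cpx -> Cpx) : Prop :=
  exists h g : Cpx -> Cpx, SH_data h g /\
    forall z, inE z -> f z = Cadd (h z) (Cconj (g z)).

Definition Copen (U : Cpx -> Prop) : Prop :=
  forall z, U z -> exists r, 0 < r /\ forall w, Cnorm (Csub w z) < r -> U w.

Definition Cconnected (S : Cpx -> Prop) : Prop :=
  ~ exists U V : Cpx -> Prop, Copen U /\ Copen V /\
      (forall z, S z -> U z \/ V z) /\
      (exists z, S z /\ U z) /\ (exists z, S z /\ V z) /\
      (forall z, S z -> ~ (U z /\ V z)).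

Definition domain (S : Cpx -> Prop) : Prop := Copen S /\ Cconnected S.

Definition convex_imag_dir (S : Cpx -> Prop) : Prop :=
  forall c : R, Cconnected (fun w => S w /\ Re w = c).

Definition image_E (f : Cpx -> Cpx) : Cpx -> Prop :=
  fun w => exists z, inE z /\ w = f z.

(* Main.v *)
From Stdlib Require Import Reals Lra Psatz ClassicalEpsilon FunctionalExtensionality.
From Coquelicot Require Import Coquelicot.
Require Import Defs.
Open Scope R_scope.

Lemma Cnorm_ge0 z : 0 <= Cnorm z.
Proof. apply sqrt_pos. Qed.

Lemma Cnorm_mul a b : Cnorm (Cmul a b) = Cnorm a * Cnorm b.
Proof.
  destruct a as [a1 a2], b as [b1 b2]; unfold Cnorm, Cmul; simpl.
  rewrite <- sqrt_mult by nra. f_equal; ring.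
Qed.

Lemma Rabs_fst_le z : Rabs (fst z) <= Cnorm z.
Proof.
  destruct z as [a b]; unfold Cnorm; simpl.
  rewrite <- sqrt_Rsqr_abs. apply sqrt_le_1_alt. unfold Rsqr; nra.
Qed.

Lemma Rabs_snd_le z : Rabs (snd z) <= Cnorm z.
Proof.
  destruct z as [a b]; unfold Cnorm; simpl.
  rewrite <- sqrt_Rsqr_abs. apply sqrt_le_1_alt. unfold Rsqr; nra.
Qed.

Lemma Cnorm_le_abs z : Cnorm z <= Rabs (fst z) + Rabs (snd z).
Proof.
  destruct z as [a b]; unfold Cnorm; simpl.
  rewrite <- (sqrt_Rsqr (Rabs a + Rabs b)) by (pose proof (Rabs_pos a); pose proof (Rabs_pos b); lra).
  apply sqrt_le_1_alt. unfold Rsqr.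
  pose proof (Rabs_pos a); pose proof (Rabs_pos b).
  assert (Rabs a * Rabs a = a * a) by (rewrite <- Rabs_mult; apply Rabs_right; nra).
  assert (Rabs b * Rabs b = b * b) by (rewrite <- Rabs_mult; apply Rabs_right; nra).
  nra.
Qed.

Lemma Cnorm_pos_iff z : 0 < Cnorm z <-> 0 < fst z * fst z + snd z * snd z.
Proof.
  destruct z as [a b]; unfold Cnorm; simpl; split; intro H.
  - destruct (Rle_lt_dec (a*a+b*b) 0) as [H1|H1]; auto.
    assert (a*a+b*b = 0) by nra. rewrite H0, sqrt_0 in H. lra.
  - apply sqrt_lt_R0; auto.
Qed.

Lemma Cnorm_lt_sq a b : Cnorm a < Cnorm b ->
  fst a * fst a + snd a * snd a < fst b * fst b + snd b * snd b.
Proof.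
  intro H. destruct (Rlt_le_dec (fst a * fst a + snd a * snd a) (fst b * fst b + snd b * snd b)); auto.
  exfalso. apply sqrt_le_1_alt in r. unfold Cnorm in H. lra.
Qed.

Lemma Cnorm_sq_lt a b : fst a * fst a + snd a * snd a < fst b * fst b + snd b * snd b ->
  Cnorm a < Cnorm b.
Proof.
  intro H. unfold Cnorm. apply sqrt_lt_1_alt. split; auto. nra.
Qed.

Lemma inE_sq z : inE z <-> fst z * fst z + snd z * snd z < 1.
Proof.
  unfold inE. replace 1 with (Cnorm Cone) at 1.
  2:{ unfold Cnorm, Cone; simpl. replace (1*1+0*0) with 1 by ring. apply sqrt_1. }
  split; intro H.
  - apply Cnorm_lt_sq in H. unfold Cone in H; simpl in H; lra.
  - apply Cnorm_sq_lt. unfold Cone; simpl; lra.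
Qed.

Lemma deriv_o F z L : Cderiv_at F z L -> forall e, 0 < e -> exists d, 0 < d /\
  forall w, Cnorm (Csub w z) < d ->
    Cnorm (Csub (Csub (F w) (F z)) (Cmul L (Csub w z))) <= e * Cnorm (Csub w z).
Proof.
  intros HF e He. destruct (HF e He) as [d [Hd Hw]]. exists d; split; auto.
  intros w Hwd. destruct (Rle_lt_dec (Cnorm (Csub w z)) 0) as [H0|H0].
  - assert (Hu : fst (Csub w z) * fst (Csub w z) + snd (Csub w z) * snd (Csub w z) <= 0).
    { destruct (Rle_lt_dec (fst (Csub w z) * fst (Csub w z) + snd (Csub w z) * snd (Csub w z)) 0); auto.
      apply Cnorm_pos_iff in r. lra. }
    assert (w = z).
    { destruct w as [w1 w2], z as [z1 z2]; unfold Csub, Cadd, Copp in Hu; simpl in Hu.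
      pose proof (Rle_0_sqr (w1 + - z1)); pose proof (Rle_0_sqr (w2 + - z2)); unfold Rsqr in *.
      assert (E1 : (w1 + - z1) * (w1 + - z1) = 0) by lra.
      assert (E2 : (w2 + - z2) * (w2 + - z2) = 0) by lra.
      apply Rmult_integral in E1; apply Rmult_integral in E2.
      f_equal; lra. }
    subst w. pose proof (Cnorm_ge0 (Csub z z)).
    replace (Csub (Csub (F z) (F z)) (Cmul L (Csub z z))) with (Csub z z).
    + nra.
    + destruct (F z), L, z; unfold Csub, Cadd, Copp, Cmul; simpl; f_equal; ring.
  - specialize (Hw w (conj H0 Hwd)).
    apply Cnorm_pos_iff in H0.
    replace (Csub (Csub (F w) (F z)) (Cmul L (Csub w z))) with
      (Cmul (Csub (Cdiv (Csub (F w) (F z)) (Csub w z)) L) (Csub w z)).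
    + rewrite Cnorm_mul. pose proof (Cnorm_ge0 (Csub w z)). apply Rmult_le_compat_r; lra.
    + revert H0. destruct (Csub w z) as [u1 u2]. destruct (F w) as [a1 a2], (F z) as [b1 b2], L as [l1 l2].
      unfold Csub, Cadd, Copp, Cmul, Cdiv, Cinv; simpl. intro H0.
      f_equal; field; lra.
Qed.

Lemma dpl_crit f x l :
  (forall e, 0 < e -> exists d, 0 < d /\ forall h, h <> 0 -> Rabs h < d ->
     Rabs (f (x+h) - f x - l*h) <= e * Rabs h) -> derivable_pt_lim f x l.
Proof.
  intros H eps Heps. destruct (H (eps/2)) as [d [Hd Hh]]; [lra|].
  exists (mkposreal d Hd). intros h Hh0 Hhd. simpl in Hhd.
  specialize (Hh h Hh0 Hhd).
  replace ((f (x + h) - f x) / h - l) with ((f (x+h) - f x - l*h) / h) by (field; auto).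
  unfold Rdiv. rewrite Rabs_mult, Rabs_inv.
  assert (0 < Rabs h) by (apply Rabs_pos_lt; auto).
  apply Rle_lt_trans with (eps/2 * Rabs h * / Rabs h).
  - apply Rmult_le_compat_r; auto. left; apply Rinv_0_lt_compat; auto.
  - field_simplify; lra.
Qed.

Lemma dpl_bound g x v : derivable_pt_lim g x v -> forall e, 0 < e ->
  exists d, 0 < d /\ forall h, Rabs h < d -> Rabs (g (x+h) - g x - v*h) <= e * Rabs h.
Proof.
  intros H e He. destruct (H e He) as [d Hd]. exists d; split; [apply cond_pos|].
  intros h Hh. destruct (Req_dec h 0) as [->|Hh0].
  - rewrite Rplus_0_r. replace (g x - g x - v*0) with 0 by ring. rewrite Rabs_R0; lra.
  - specialize (Hd h Hh0 Hh).
    replace (g (x+h) - g x - v*h) with (((g (x + h) - g x) / h - v) * h) by (field; auto).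
    rewrite Rabs_mult. apply Rmult_le_compat_r; [apply Rabs_pos|lra].
Qed.

Lemma chain_rule F z0 L (g1 g2 : R -> R) x0 v1 v2 :
  Cderiv_at F z0 L -> (g1 x0, g2 x0) = z0 ->
  derivable_pt_lim g1 x0 v1 -> derivable_pt_lim g2 x0 v2 ->
  derivable_pt_lim (fun x => fst (F (g1 x, g2 x))) x0 (fst (Cmul L (v1, v2))) /\
  derivable_pt_lim (fun x => snd (F (g1 x, g2 x))) x0 (snd (Cmul L (v1, v2))).
Proof.
  intros HF Hz H1 H2.
  assert (key : forall e, 0 < e -> exists d, 0 < d /\ forall h, h <> 0 -> Rabs h < d ->
    Rabs (fst (F (g1 (x0+h), g2 (x0+h))) - fst (F (g1 x0, g2 x0)) - fst (Cmul L (v1, v2)) * h) <= e * Rabs h /\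
    Rabs (snd (F (g1 (x0+h), g2 (x0+h))) - snd (F (g1 x0, g2 x0)) - snd (Cmul L (v1, v2)) * h) <= e * Rabs h).
  { intros e He.
    set (M := Cnorm L). set (K := Rabs v1 + Rabs v2 + 2).
    assert (HM : 0 <= M) by apply Cnorm_ge0.
    assert (HK : 0 < K) by (unfold K; pose proof (Rabs_pos v1); pose proof (Rabs_pos v2); lra).
    set (e1 := Rmin 1 (e / (4 * (M + 1)))).
    assert (He1 : 0 < e1) by (unfold e1; apply Rmin_pos; [lra| apply Rdiv_lt_0_compat; lra]).
    assert (He1a : e1 <= 1) by apply Rmin_l.
    assert (He1b : e1 <= e / (4 * (M + 1))) by apply Rmin_r.
    set (e2 := e / (2 * K)).
    assert (He2 : 0 < e2) by (apply Rdiv_lt_0_compat; lra).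
    destruct (dpl_bound g1 x0 v1 H1 e1 He1) as [d1 [Hd1 B1]].
    destruct (dpl_bound g2 x0 v2 H2 e1 He1) as [d2 [Hd2 B2]].
    destruct (deriv_o F z0 L HF e2 He2) as [d [Hd Bo]].
    exists (Rmin (Rmin d1 d2) (d / K)).
    split. { apply Rmin_pos; [apply Rmin_pos; auto| apply Rdiv_lt_0_compat; auto]. }
    intros h Hh0 Hh.
    assert (Hh1 : Rabs h < d1) by (eapply Rlt_le_trans; [exact Hh| eapply Rle_trans; [apply Rmin_l|apply Rmin_l]]).
    assert (Hh2 : Rabs h < d2) by (eapply Rlt_le_trans; [exact Hh| eapply Rle_trans; [apply Rmin_l|apply Rmin_r]]).
    assert (Hh3 : Rabs h < d / K) by (eapply Rlt_le_trans; [exact Hh| apply Rmin_r]).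
    specialize (B1 h Hh1). specialize (B2 h Hh2).
    set (w := (g1 (x0+h), g2 (x0+h))).
    assert (Hdw : Cnorm (Csub w z0) <= K * Rabs h).
    { eapply Rle_trans; [apply Cnorm_le_abs|].
      subst w; rewrite <- Hz; unfold Csub, Cadd, Copp; simpl.
      unfold K.
      assert (Rabs (g1 (x0 + h) + - g1 x0) <= (Rabs v1 + e1) * Rabs h).
      { replace (g1 (x0 + h) + - g1 x0) with ((g1 (x0 + h) - g1 x0 - v1 * h) + v1 * h) by ring.
        eapply Rle_trans; [apply Rabs_triang|]. rewrite Rabs_mult. lra. }
      assert (Rabs (g2 (x0 + h) + - g2 x0) <= (Rabs v2 + e1) * Rabs h).
      { replace (g2 (x0 + h) + - g2 x0) with ((g2 (x0 + h) - g2 x0 - v2 * h) + v2 * h) by ring.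
        eapply Rle_trans; [apply Rabs_triang|]. rewrite Rabs_mult. lra. }
      pose proof (Rabs_pos h). nra. }
    assert (Hlt : Cnorm (Csub w z0) < d).
    { apply Rle_lt_trans with (K * Rabs h); auto.
      apply Rmult_lt_compat_l with (r := K) in Hh3; auto.
      replace (K * (d / K)) with d in Hh3 by (field; lra). exact Hh3. }
    specialize (Bo w Hlt).
    set (B := Csub (Csub w z0) (Cmul (RtoC h) (v1, v2))).
    assert (HB : Cnorm B <= 2 * e1 * Rabs h).
    { eapply Rle_trans; [apply Cnorm_le_abs|].
      subst B w; rewrite <- Hz; unfold Csub, Cadd, Copp, Cmul, RtoC; simpl.
      replace (g1 (x0 + h) + - g1 x0 + - (h * v1 - 0 * v2)) with (g1 (x0 + h) - g1 x0 - v1 * h) by ring.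
      replace (g2 (x0 + h) + - g2 x0 + - (h * v2 + 0 * v1)) with (g2 (x0 + h) - g2 x0 - v2 * h) by ring.
      lra. }
    set (A := Csub (Csub (F w) (F z0)) (Cmul L (Csub w z0))).
    assert (HLB : Cnorm (Cmul L B) <= M * (2 * e1 * Rabs h)).
    { rewrite Cnorm_mul. apply Rmult_le_compat_l; auto. }
    assert (Hfin : e2 * Cnorm (Csub w z0) + M * (2 * e1 * Rabs h) <= e * Rabs h).
    { pose proof (Rabs_pos h).
      assert (e2 * Cnorm (Csub w z0) <= e2 * (K * Rabs h)) by (apply Rmult_le_compat_l; lra).
      assert (e2 * (K * Rabs h) = e / 2 * Rabs h) by (unfold e2; field; lra).
      assert (M * (2 * e1) <= e / 2).
      { apply Rle_trans with (M * (2 * (e / (4 * (M + 1))))).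
        - apply Rmult_le_compat_l; lra.
        - replace (M * (2 * (e / (4 * (M + 1))))) with (e/2 * (M / (M+1))) by (field; lra).
          assert (M / (M+1) <= 1).
          { apply Rmult_le_reg_r with (M+1); [lra|]. field_simplify; lra. }
          nra. }
      nra. }
    assert (Hid1 : fst (F w) - fst (F (g1 x0, g2 x0)) - fst (Cmul L (v1, v2)) * h
                   = fst A + fst (Cmul L B)).
    { subst A B. rewrite Hz. destruct (F w), (F z0), L, w, z0; unfold Csub, Cadd, Copp, Cmul, RtoC; simpl; ring. }
    assert (Hid2 : snd (F w) - snd (F (g1 x0, g2 x0)) - snd (Cmul L (v1, v2)) * h
                   = snd A + snd (Cmul L B)).
    { subst A B. rewrite Hz. destruct (F w), (F z0), L, w, z0; unfold Csub, Cadd, Copp, Cmul, RtoC; simpl; ring. }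
    assert (BoA : Cnorm A <= e2 * Cnorm (Csub w z0)) by exact Bo.
    rewrite Hid1, Hid2. split.
    - eapply Rle_trans; [apply Rabs_triang|].
      pose proof (Rabs_fst_le A); pose proof (Rabs_fst_le (Cmul L B)). lra.
    - eapply Rle_trans; [apply Rabs_triang|].
      pose proof (Rabs_snd_le A); pose proof (Rabs_snd_le (Cmul L B)). lra. }
  split; apply dpl_crit; intros e He; destruct (key e He) as [d [Hd Hk]]; exists d; split; auto;
    intros h Hh0 Hh; apply Hk; auto.
Qed.

Definition zD (c s : R) := (1+c)*(1+c)+s*s.
Definition zeta (c s : R) : Cpx := (1 - (1+c)/zD c s, s / zD c s).
Definition phi (z : Cpx) : Cpx := Cdiv z (Csub Cone z).

Lemma zD_pos c s : -1/2 < c -> 0 < zD c s.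
Proof. intros; unfold zD; nra. Qed.

Lemma phi_zeta c s : -1/2 < c -> phi (zeta c s) = (c, s).
Proof.
  intros Hc. pose proof (zD_pos c s Hc) as HD.
  unfold phi, zeta, Cdiv, Cmul, Cinv, Csub, Cadd, Copp, Cone; simpl.
  unfold zD in *.
  f_equal; field; lra.
Qed.

Lemma zeta_inE c s : -1/2 < c -> inE (zeta c s).
Proof.
  intros Hc. pose proof (zD_pos c s Hc) as HD. apply inE_sq. unfold zeta; simpl.
  unfold zD in *.
  replace ((1 - (1 + c) / ((1 + c) * (1 + c) + s * s)) * (1 - (1 + c) / ((1 + c) * (1 + c) + s * s)) +
   s / ((1 + c) * (1 + c) + s * s) * (s / ((1 + c) * (1 + c) + s * s)))
   with ((c*c + s*s) / ((1 + c) * (1 + c) + s * s)) by (field; lra).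
  apply Rmult_lt_reg_r with ((1 + c) * (1 + c) + s * s); auto.
  field_simplify; lra.
Qed.

Lemma zeta_phi z : inE z -> -1/2 < fst (phi z) /\ zeta (fst (phi z)) (snd (phi z)) = z.
Proof.
  intros Hz. apply inE_sq in Hz. destruct z as [x y]; simpl in Hz.
  assert (Hd : 0 < (1 - x) * (1 - x) + y * y) by nra.
  unfold phi, zeta, zD, Cdiv, Cmul, Cinv, Csub, Cadd, Copp, Cone; simpl.
  split.
  - apply Rmult_lt_reg_r with ((1 + - x) * ((1 + - x) * 1) + (0 + - y) * ((0 + - y) * 1)); [nra|].
    field_simplify; [nra|nra].
  - f_equal; field; nra.
Qed.

Definition Vs (c s : R) : Cpx :=
  (Derive (fun s => fst (zeta c s)) s, Derive (fun s => snd (zeta c s)) s).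

Lemma Vs_deriv c s : -1/2 < c ->
  derivable_pt_lim (fun s => fst (zeta c s)) s (fst (Vs c s)) /\
  derivable_pt_lim (fun s => snd (zeta c s)) s (snd (Vs c s)).
Proof.
  intros Hc. pose proof (zD_pos c s Hc) as HD. unfold Vs; simpl.
  split; apply is_derive_Reals; apply Derive_correct; unfold zeta, zD in *; simpl; auto_derive; lra.
Qed.

Lemma zeta_cderiv c s : -1/2 < c -> exists v1 v2,
  derivable_pt_lim (fun c => fst (zeta c s)) c v1 /\
  derivable_pt_lim (fun c => snd (zeta c s)) c v2.
Proof.
  intros Hc. pose proof (zD_pos c s Hc) as HD.
  exists (Derive (fun c => fst (zeta c s)) c), (Derive (fun c => snd (zeta c s)) c).
  split; apply is_derive_Reals; apply Derive_correct; unfold zeta, zD in *; simpl; auto_derive; lra.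
Qed.

Definition shear (h g h' g' : Cpx -> Cpx) : Prop :=
 (forall z, inE z -> Cderiv_at h z (h' z) /\ Cderiv_at g z (g' z)) /\
 (forall z, inE z -> h' z <> Czero /\ Cnorm (Cdiv (g' z) (h' z)) < 1) /\
 (forall z, inE z -> Cadd (h z) (g z) = phi z).

Lemma pair_eta (z : Cpx) : (fst z, snd z) = z.
Proof. destruct z; reflexivity. Qed.

Lemma nz_sq z : z <> Czero -> 0 < fst z * fst z + snd z * snd z.
Proof.
  intro H. destruct z as [a b]; simpl.
  destruct (Rlt_le_dec 0 (a*a+b*b)); auto. exfalso; apply H.
  pose proof (Rle_0_sqr a); pose proof (Rle_0_sqr b); unfold Rsqr in *.
  assert (E1 : a * a = 0) by lra. assert (E2 : b * b = 0) by lra.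
  apply Rmult_integral in E1; apply Rmult_integral in E2.
  unfold Czero; f_equal; lra.
Qed.

Lemma div_mul_id X Y W : Y <> Czero -> Cmul (Cdiv X Y) (Cmul Y W) = Cmul X W.
Proof.
  intro H. apply nz_sq in H. destruct X as [x1 x2], Y as [y1 y2], W as [w1 w2]; simpl in H.
  unfold Cdiv, Cmul, Cinv; simpl. f_equal; field; lra.
Qed.

Lemma dpl_unique_ext (f1 f2 : R -> R) x l1 l2 :
  (forall y, f1 y = f2 y) -> derivable_pt_lim f1 x l1 -> derivable_pt_lim f2 x l2 -> l1 = l2.
Proof.
  intros E H1 H2. assert (f1 = f2) by (apply functional_extensionality; auto).
  subst. eapply uniqueness_limite; eauto.
Qed.

Lemma shear_chain h g h' g' c s : shear h g h' g' -> -1/2 < c ->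
  let z := zeta c s in
  derivable_pt_lim (fun x => fst (h (zeta c x))) s (fst (Cmul (h' z) (Vs c s))) /\
  derivable_pt_lim (fun x => snd (h (zeta c x))) s (snd (Cmul (h' z) (Vs c s))) /\
  derivable_pt_lim (fun x => fst (g (zeta c x))) s (fst (Cmul (g' z) (Vs c s))) /\
  derivable_pt_lim (fun x => snd (g (zeta c x))) s (snd (Cmul (g' z) (Vs c s))).
Proof.
  intros [HD [HS HP]] Hc z.
  destruct (Vs_deriv c s Hc) as [D1 D2].
  assert (Hz : inE z) by (apply zeta_inE; auto).
  destruct (HD z Hz) as [Dh Dg].
  assert (Ez : (fst (zeta c s), snd (zeta c s)) = z) by apply pair_eta.
  destruct (chain_rule h z (h' z) _ _ s _ _ Dh Ez D1 D2) as [A1 A2].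
  destruct (chain_rule g z (g' z) _ _ s _ _ Dg Ez D1 D2) as [A3 A4].
  repeat split; [exact A1|exact A2|exact A3|exact A4].
Qed.

Lemma shear_ab h g h' g' c s : shear h g h' g' -> -1/2 < c ->
  let z := zeta c s in
  let a := Cmul (h' z) (Vs c s) in let b := Cmul (g' z) (Vs c s) in
  fst a + fst b = 0 /\ snd a + snd b = 1 /\ 1/2 < snd a.
Proof.
  intros Hsh Hc z a b.
  destruct (shear_chain h g h' g' c s Hsh Hc) as [A1 [A2 [A3 A4]]]. fold z in A1, A2, A3, A4.
  destruct Hsh as [HD [HS HP]].
  assert (Hz : inE z) by (apply zeta_inE; auto).
  assert (HPx : forall x, Cadd (h (zeta c x)) (g (zeta c x)) = (c, x)).
  { intro x. rewrite HP by (apply zeta_inE; auto). apply phi_zeta; auto. }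
  assert (E1 : fst a + fst b = 0).
  { apply (dpl_unique_ext (fun x => fst (h (zeta c x)) + fst (g (zeta c x))) (fct_cte c) s).
    - intro y. unfold fct_cte. change (fst (Cadd (h (zeta c y)) (g (zeta c y))) = c). rewrite HPx. reflexivity.
    - exact (derivable_pt_lim_plus _ _ s _ _ A1 A3).
    - apply derivable_pt_lim_const. }
  assert (E2 : snd a + snd b = 1).
  { apply (dpl_unique_ext (fun x => snd (h (zeta c x)) + snd (g (zeta c x))) id s).
    - intro y. unfold id. change (snd (Cadd (h (zeta c y)) (g (zeta c y))) = y). rewrite HPx. reflexivity.
    - exact (derivable_pt_lim_plus _ _ s _ _ A2 A4).
    - apply derivable_pt_lim_id. }
  split; [exact E1|split; [exact E2|]].
  destruct (HS z Hz) as [Hh0 Hr].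
  assert (Hb : b = Cmul (Cdiv (g' z) (h' z)) a).
  { unfold a, b. rewrite div_mul_id; auto. }
  assert (Ha : 0 < Cnorm a).
  { apply Cnorm_pos_iff. destruct (Rlt_le_dec 0 (fst a * fst a + snd a * snd a)); auto.
    exfalso. assert (fst a = 0 /\ snd a = 0) as [Ea1 Ea2].
    { pose proof (Rle_0_sqr (fst a)); pose proof (Rle_0_sqr (snd a)); unfold Rsqr in *.
      assert (X1 : fst a * fst a = 0) by lra. assert (X2 : snd a * snd a = 0) by lra.
      apply Rmult_integral in X1; apply Rmult_integral in X2. lra. }
    rewrite Hb in E2. destruct a as [a1 a2]; simpl in Ea1, Ea2; subst.
    destruct (Cdiv (g' z) (h' z)); unfold Cmul in E2; simpl in E2. lra. }
  assert (Hlt : Cnorm b < Cnorm a).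
  { rewrite Hb, Cnorm_mul. pose proof (Cnorm_ge0 (Cdiv (g' z) (h' z))). nra. }
  apply Cnorm_lt_sq in Hlt.
  assert (fst b = - fst a) by lra. assert (snd b = 1 - snd a) by lra.
  rewrite H, H0 in Hlt. nra.
Qed.

Lemma shear_qderiv h g h' g' c s : shear h g h' g' -> -1/2 < c ->
  exists l, 0 < l /\
  derivable_pt_lim (fun x => snd (h (zeta c x)) - snd (g (zeta c x))) s l.
Proof.
  intros Hsh Hc.
  destruct (shear_ab h g h' g' c s Hsh Hc) as [E1 [E2 E3]].
  destruct (shear_chain h g h' g' c s Hsh Hc) as [A1 [A2 [A3 A4]]].
  eexists; split; [|exact (derivable_pt_lim_minus _ _ s _ _ A2 A4)].
  simpl in *. lra.
Qed.

Lemma shear_ccont h g h' g' c s : shear h g h' g' -> -1/2 < c ->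
  continuity_pt (fun x => snd (h (zeta x s)) - snd (g (zeta x s))) c.
Proof.
  intros [HD [HS HP]] Hc.
  destruct (zeta_cderiv c s Hc) as [v1 [v2 [D1 D2]]].
  assert (Hz : inE (zeta c s)) by (apply zeta_inE; auto).
  destruct (HD _ Hz) as [Dh Dg].
  assert (Ez : (fst (zeta c s), snd (zeta c s)) = zeta c s) by apply pair_eta.
  destruct (chain_rule h _ _ _ _ c _ _ Dh Ez D1 D2) as [A1 A2].
  destruct (chain_rule g _ _ _ _ c _ _ Dg Ez D1 D2) as [A3 A4].
  apply derivable_continuous_pt. eexists. exact (derivable_pt_lim_minus _ _ c _ _ A2 A4).
Qed.

Lemma cont_eps f x : continuity_pt f x -> forall e, 0 < e ->
  exists d, 0 < d /\ forall y, Rabs (y - x) < d -> Rabs (f y - f x) < e.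
Proof.
  intros H e He. unfold continuity_pt, continue_in, limit1_in, limit_in in H. simpl in H.
  unfold R_dist in H. destruct (H e He) as [d [Hd Hy]]. exists d; split; auto.
  intros y Hyd. destruct (Req_dec x y) as [<-|Hne].
  - replace (f x - f x) with 0 by ring. rewrite Rabs_R0; auto.
  - apply Hy. split; auto. split; auto. exact I.
Qed.

Lemma eps_cont f x : (forall e, 0 < e ->
  exists d, 0 < d /\ forall y, Rabs (y - x) < d -> Rabs (f y - f x) < e) -> continuity_pt f x.
Proof.
  intros H. unfold continuity_pt, continue_in, limit1_in, limit_in. simpl. unfold R_dist.
  intros e He. destruct (H e He) as [d [Hd Hy]]. exists d; split; auto.
  intros y [_ Hyd]. apply Hy; auto.
Qed.

Definition clamp (p q x : R) := Rmax p (Rmin q x).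

Lemma clamp_in p q x : p <= q -> p <= clamp p q x <= q.
Proof. intros. unfold clamp, Rmax, Rmin; repeat destruct Rle_dec; lra. Qed.

Lemma clamp_id p q x : p <= x <= q -> clamp p q x = x.
Proof. intros. unfold clamp, Rmax, Rmin; repeat destruct Rle_dec; lra. Qed.

Lemma clamp_lip p q x y : p <= q -> Rabs (clamp p q y - clamp p q x) <= Rabs (y - x).
Proof. intros. unfold clamp, Rmax, Rmin; repeat destruct Rle_dec; split_Rabs; lra. Qed.

Lemma path_core (S U V : Cpx -> Prop) (g : R -> Cpx) (I : R -> Prop) p q :
  Copen U -> Copen V -> (forall z, S z -> U z \/ V z) -> (forall z, S z -> ~ (U z /\ V z)) ->
  p <= q -> (forall x, p <= x <= q -> I x) -> (forall x, I x -> S (g x)) ->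
  (forall x, I x -> forall e, 0 < e -> exists d, 0 < d /\
     forall y, I y -> Rabs (y - x) < d -> Cnorm (Csub (g y) (g x)) < e) ->
  U (g p) -> V (g q) -> False.
Proof.
  intros HU HV Hcov Hdis Hpq HI HS Hc Up Vq.
  set (chi := fun x => if excluded_middle_informative (U (g (clamp p q x))) then -1 else 1).
  assert (Hloc : forall x, exists d, 0 < d /\ forall y, Rabs (y - x) < d -> chi y = chi x).
  { intro x. pose proof (clamp_in p q x Hpq) as Hx.
    set (y0 := clamp p q x) in *.
    assert (Iy0 : I y0) by auto.
    assert (Sy0 : S (g y0)) by auto.
    assert (Hin : forall (W : Cpx -> Prop), Copen W -> W (g y0) ->
       exists d, 0 < d /\ forall y, Rabs (y - x) < d -> W (g (clamp p q y))).
    { intros W HW Wy. destruct (HW _ Wy) as [r [Hr Hb]].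
      destruct (Hc y0 Iy0 r Hr) as [d [Hd Hy]]. exists d; split; auto.
      intros y Hyx. apply Hb. apply Hy.
      - apply HI, clamp_in; auto.
      - eapply Rle_lt_trans; [apply clamp_lip; auto|]. exact Hyx. }
    destruct (Hcov _ Sy0) as [Uy|Vy].
    - destruct (Hin U HU Uy) as [d [Hd Hy]]. exists d; split; auto. intros y Hyx.
      unfold chi. fold y0.
      destruct (excluded_middle_informative (U (g (clamp p q y)))) as [A|A];
      destruct (excluded_middle_informative (U (g y0))) as [B|B]; auto.
      + contradiction.
      + exfalso; apply A; auto.
    - destruct (Hin V HV Vy) as [d [Hd Hy]]. exists d; split; auto. intros y Hyx.
      unfold chi. fold y0.
      assert (Sy : S (g (clamp p q y))) by (apply HS, HI, clamp_in; auto).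
      destruct (excluded_middle_informative (U (g (clamp p q y)))) as [A|A];
      destruct (excluded_middle_informative (U (g y0))) as [B|B]; auto.
      + exfalso. apply (Hdis _ Sy). split; auto.
      + exfalso. apply (Hdis _ Sy0). split; auto. }
  assert (Hcont : continuity (fun x => chi x)).
  { intro x. apply eps_cont. intros e He. destruct (Hloc x) as [d [Hd Hy]].
    exists d; split; auto. intros y Hyx. rewrite (Hy y Hyx). replace (chi x - chi x) with 0 by ring.
    rewrite Rabs_R0; auto. }
  assert (Sp : S (g p)) by (apply HS, HI; lra).
  assert (Sq : S (g q)) by (apply HS, HI; lra).
  destruct (Req_dec p q) as [<-|Hne].
  { apply (Hdis _ Sp); split; auto. }
  assert (Cp : chi p = -1).
  { unfold chi. rewrite clamp_id by lra. destruct excluded_middle_informative; auto. contradiction. }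
  assert (Cq : chi q = 1).
  { unfold chi. rewrite clamp_id by lra. destruct excluded_middle_informative as [A|A]; auto.
    exfalso; apply (Hdis _ Sq); split; auto. }
  destruct (IVT (fun x => chi x) p q Hcont ltac:(lra) ltac:(lra) ltac:(lra)) as [z [_ Hz]].
  unfold chi in Hz. destruct excluded_middle_informative in Hz; lra.
Qed.

Lemma path_sep (S U V : Cpx -> Prop) (g : R -> Cpx) (I : R -> Prop) p q :
  Copen U -> Copen V -> (forall z, S z -> U z \/ V z) -> (forall z, S z -> ~ (U z /\ V z)) ->
  (forall x, Rmin p q <= x <= Rmax p q -> I x) -> (forall x, I x -> S (g x)) ->
  (forall x, I x -> forall e, 0 < e -> exists d, 0 < d /\
     forall y, I y -> Rabs (y - x) < d -> Cnorm (Csub (g y) (g x)) < e) ->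
  U (g p) -> V (g q) -> False.
Proof.
  intros HU HV Hcov Hdis HI HS Hc Up Vq.
  destruct (Rle_dec p q) as [Hpq|Hpq].
  - rewrite Rmin_left, Rmax_right in HI by lra.
    exact (path_core S U V g I p q HU HV Hcov Hdis Hpq HI HS Hc Up Vq).
  - rewrite Rmin_right, Rmax_left in HI by lra.
    apply (path_core S V U g I q p HV HU); auto; try lra.
    + intros z Sz; destruct (Hcov z Sz); tauto.
    + intros z Sz [A B]; apply (Hdis z Sz); tauto.
Qed.


Lemma img_inj (F : Cpx -> Cpx) (Q : R -> R -> R) (Hrep : forall z, inE z -> exists c s, -1/2 < c /\ z = zeta c s) (HF : forall c s, -1/2 < c -> F (zeta c s) = (c, Q c s)) (Hmono : forall c, -1/2 < c -> forall s1 s2, s1 < s2 -> Q c s1 < Q c s2) (Hcs : forall c, -1/2 < c -> continuity (Q c)) (Hcc : forall c s, -1/2 < c -> continuity_pt (fun x => Q x s) c) : forall z w, inE z -> inE w -> F z = F w -> z = w.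
Proof.
  intros z w Hz Hw E.
  destruct (Hrep z Hz) as [c1 [s1 [H1 ->]]]. destruct (Hrep w Hw) as [c2 [s2 [H2 ->]]].
  rewrite HF, HF in E by auto. injection E as Ec Eq. subst c2.
  destruct (Rtotal_order s1 s2) as [L|[L|L]].
  - pose proof (Hmono c1 H1 _ _ L). lra.
  - subst; auto.
  - pose proof (Hmono c1 H1 _ _ L). lra.
Qed.

Lemma img_char (F : Cpx -> Cpx) (Q : R -> R -> R) (Hrep : forall z, inE z -> exists c s, -1/2 < c /\ z = zeta c s) (HF : forall c s, -1/2 < c -> F (zeta c s) = (c, Q c s)) (Hmono : forall c, -1/2 < c -> forall s1 s2, s1 < s2 -> Q c s1 < Q c s2) (Hcs : forall c, -1/2 < c -> continuity (Q c)) (Hcc : forall c s, -1/2 < c -> continuity_pt (fun x => Q x s) c) w : image_E F w -> exists c s, -1/2 < c /\ w = (c, Q c s) /\ w = F (zeta c s).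
Proof.
  intros [z [Hz ->]]. destruct (Hrep z Hz) as [c [s [Hc ->]]].
  exists c, s; split; [auto|split; [rewrite HF; auto|reflexivity]].
Qed.

Lemma img_in (F : Cpx -> Cpx) (Q : R -> R -> R) (Hrep : forall z, inE z -> exists c s, -1/2 < c /\ z = zeta c s) (HF : forall c s, -1/2 < c -> F (zeta c s) = (c, Q c s)) (Hmono : forall c, -1/2 < c -> forall s1 s2, s1 < s2 -> Q c s1 < Q c s2) (Hcs : forall c, -1/2 < c -> continuity (Q c)) (Hcc : forall c s, -1/2 < c -> continuity_pt (fun x => Q x s) c) c s : -1/2 < c -> image_E F (c, Q c s).
Proof. intros Hc. exists (zeta c s); split; [apply zeta_inE; auto|rewrite HF; auto]. Qed.

Lemma img_open (F : Cpx -> Cpx) (Q : R -> R -> R) (Hrep : forall z, inE z -> exists c s, -1/2 < c /\ z = zeta c s) (HF : forall c s, -1/2 < c -> F (zeta c s) = (c, Q c s)) (Hmono : forall c, -1/2 < c -> forall s1 s2, s1 < s2 -> Q c s1 < Q c s2) (Hcs : forall c, -1/2 < c -> continuity (Q c)) (Hcc : forall c s, -1/2 < c -> continuity_pt (fun x => Q x s) c) : Copen (image_E F).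
Proof.
  intros w Hw. destruct ((img_char F Q Hrep HF Hmono Hcs Hcc) w Hw) as [c0 [s0 [Hc0 [Ew _]]]]. subst w.
  set (y1 := Q c0 (s0 - 1)). set (y0 := Q c0 s0). set (y2 := Q c0 (s0 + 1)).
  assert (L1 : y1 < y0) by (apply Hmono; auto; lra).
  assert (L2 : y0 < y2) by (apply Hmono; auto; lra).
  set (m := Rmin (y0 - y1) (y2 - y0)).
  assert (Hm : 0 < m) by (apply Rmin_pos; lra).
  destruct (cont_eps _ _ (Hcc c0 (s0 - 1) Hc0) (m/2) ltac:(lra)) as [d1 [Hd1 C1]].
  destruct (cont_eps _ _ (Hcc c0 (s0 + 1) Hc0) (m/2) ltac:(lra)) as [d2 [Hd2 C2]].
  exists (Rmin (Rmin d1 d2) (Rmin (c0 + 1/2) (m/2))). split.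
  { apply Rmin_pos; apply Rmin_pos; lra. }
  intros w Hwr. destruct w as [c y].
  pose proof (Rabs_fst_le (Csub (c, y) (c0, Q c0 s0))) as R1.
  pose proof (Rabs_snd_le (Csub (c, y) (c0, Q c0 s0))) as R2.
  unfold Csub, Cadd, Copp in R1, R2; simpl in R1, R2.
  assert (A1 : Rabs (c - c0) < d1).
  { eapply Rle_lt_trans; [exact R1|]. eapply Rlt_le_trans; [exact Hwr|].
    eapply Rle_trans; apply Rmin_l. }
  assert (A2 : Rabs (c - c0) < d2).
  { eapply Rle_lt_trans; [exact R1|]. eapply Rlt_le_trans; [exact Hwr|].
    eapply Rle_trans; [apply Rmin_l| apply Rmin_r]. }
  assert (A3 : Rabs (c - c0) < c0 + 1/2).
  { eapply Rle_lt_trans; [exact R1|]. eapply Rlt_le_trans; [exact Hwr|].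
    eapply Rle_trans; [apply Rmin_r| apply Rmin_l]. }
  assert (A4 : Rabs (y - y0) < m/2).
  { eapply Rle_lt_trans; [exact R2|]. eapply Rlt_le_trans; [exact Hwr|].
    eapply Rle_trans; [apply Rmin_r| apply Rmin_r]. }
  specialize (C1 c A1). specialize (C2 c A2).
  assert (Hc : -1/2 < c) by (revert A3; split_Rabs; lra).
  assert (m <= y0 - y1) by apply Rmin_l. assert (m <= y2 - y0) by apply Rmin_r.
  fold y1 in C1. fold y2 in C2.
  assert (B1 : Q c (s0 - 1) - y < 0) by (revert C1 A4; split_Rabs; lra).
  assert (B2 : 0 < Q c (s0 + 1) - y) by (revert C2 A4; split_Rabs; lra).
  assert (Hct : continuity (fun s => Q c s - y)).
  { apply (continuity_minus (Q c) (fun _ => y)); [apply Hcs; auto| apply continuity_const; intros ? ?; auto]. }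
  destruct (IVT (fun s => Q c s - y) (s0 - 1) (s0 + 1) Hct ltac:(lra) B1 B2) as [s [_ Hs]].
  replace y with (Q c s) by lra. apply (img_in F Q Hrep HF Hmono Hcs Hcc); auto.
Qed.

Lemma hpath_ok (F : Cpx -> Cpx) (Q : R -> R -> R) (Hrep : forall z, inE z -> exists c s, -1/2 < c /\ z = zeta c s) (HF : forall c s, -1/2 < c -> F (zeta c s) = (c, Q c s)) (Hmono : forall c, -1/2 < c -> forall s1 s2, s1 < s2 -> Q c s1 < Q c s2) (Hcs : forall c, -1/2 < c -> continuity (Q c)) (Hcc : forall c s, -1/2 < c -> continuity_pt (fun x => Q x s) c) s : forall x, -1/2 < x -> forall e, 0 < e -> exists d, 0 < d /\
  forall y, -1/2 < y -> Rabs (y - x) < d -> Cnorm (Csub (F (zeta y s)) (F (zeta x s))) < e.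
Proof.
  intros x Hx e He.
  destruct (cont_eps _ _ (Hcc x s Hx) (e/2) ltac:(lra)) as [d [Hd C]].
  exists (Rmin d (e/2)); split; [apply Rmin_pos; lra|].
  intros y Hy Hyx. rewrite HF, HF by auto.
  eapply Rle_lt_trans; [apply Cnorm_le_abs|]. unfold Csub, Cadd, Copp; simpl.
  assert (Rabs (y - x) < d) by (eapply Rlt_le_trans; [exact Hyx|apply Rmin_l]).
  assert (Rabs (y - x) < e/2) by (eapply Rlt_le_trans; [exact Hyx|apply Rmin_r]).
  specialize (C y H). unfold Rminus in *. lra.
Qed.

Lemma vpath_ok (F : Cpx -> Cpx) (Q : R -> R -> R) (Hrep : forall z, inE z -> exists c s, -1/2 < c /\ z = zeta c s) (HF : forall c s, -1/2 < c -> F (zeta c s) = (c, Q c s)) (Hmono : forall c, -1/2 < c -> forall s1 s2, s1 < s2 -> Q c s1 < Q c s2) (Hcs : forall c, -1/2 < c -> continuity (Q c)) (Hcc : forall c s, -1/2 < c -> continuity_pt (fun x => Q x s) c) c : -1/2 < c -> forall x : R, True -> forall e, 0 < e -> exists d, 0 < d /\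
  forall y, True -> Rabs (y - x) < d -> Cnorm (Csub (F (zeta c y)) (F (zeta c x))) < e.
Proof.
  intros Hc x _ e He.
  destruct (cont_eps _ _ (Hcs c Hc x) (e/2) ltac:(lra)) as [d [Hd C]].
  exists d; split; auto.
  intros y _ Hyx. rewrite HF, HF by auto.
  eapply Rle_lt_trans; [apply Cnorm_le_abs|]. unfold Csub, Cadd, Copp; simpl.
  specialize (C y Hyx). replace (c + - c) with 0 by ring. rewrite Rabs_R0.
  unfold Rminus in *. lra.
Qed.

Lemma img_conn (F : Cpx -> Cpx) (Q : R -> R -> R) (Hrep : forall z, inE z -> exists c s, -1/2 < c /\ z = zeta c s) (HF : forall c s, -1/2 < c -> F (zeta c s) = (c, Q c s)) (Hmono : forall c, -1/2 < c -> forall s1 s2, s1 < s2 -> Q c s1 < Q c s2) (Hcs : forall c, -1/2 < c -> continuity (Q c)) (Hcc : forall c s, -1/2 < c -> continuity_pt (fun x => Q x s) c) : Cconnected (image_E F).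
Proof.
  intros [U [V [HU [HV [Hcov [[a [Sa Ua]] [[b [Sb Vb]] Hdis]]]]]]].
  destruct ((img_char F Q Hrep HF Hmono Hcs Hcc) a Sa) as [ca [sa [Hca [_ Ea]]]].
  destruct ((img_char F Q Hrep HF Hmono Hcs Hcc) b Sb) as [cb [sb [Hcb [_ Eb]]]].
  assert (Sm : image_E F (F (zeta cb sa))) by (exists (zeta cb sa); split; [apply zeta_inE|]; auto).
  destruct (Hcov _ Sm) as [Um|Vm].
  - apply (path_sep (image_E F) U V (fun y => F (zeta cb y)) (fun _ => True) sa sb HU HV Hcov Hdis);
      auto.
    + intros x _. exists (zeta cb x); split; [apply zeta_inE|]; auto.
    + apply (vpath_ok F Q Hrep HF Hmono Hcs Hcc); auto.
    + rewrite <- Eb; auto.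
  - apply (path_sep (image_E F) U V (fun x => F (zeta x sa)) (fun x => -1/2 < x) ca cb HU HV Hcov Hdis).
    + intros x Hx. unfold Rmin, Rmax in Hx; destruct Rle_dec in Hx; lra.
    + intros x Hx. exists (zeta x sa); split; [apply zeta_inE|]; auto.
    + apply (hpath_ok F Q Hrep HF Hmono Hcs Hcc).
    + simpl; rewrite <- Ea; auto.
    + simpl; auto.
Qed.

Lemma img_vert (F : Cpx -> Cpx) (Q : R -> R -> R) (Hrep : forall z, inE z -> exists c s, -1/2 < c /\ z = zeta c s) (HF : forall c s, -1/2 < c -> F (zeta c s) = (c, Q c s)) (Hmono : forall c, -1/2 < c -> forall s1 s2, s1 < s2 -> Q c s1 < Q c s2) (Hcs : forall c, -1/2 < c -> continuity (Q c)) (Hcc : forall c s, -1/2 < c -> continuity_pt (fun x => Q x s) c) : convex_imag_dir (image_E F).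
Proof.
  intros c0 [U [V [HU [HV [Hcov [[a [[Sa Ra] Ua]] [[b [[Sb Rb] Vb]] Hdis]]]]]]].
  destruct ((img_char F Q Hrep HF Hmono Hcs Hcc) a Sa) as [ca [sa [Hca [Ea' Ea]]]].
  destruct ((img_char F Q Hrep HF Hmono Hcs Hcc) b Sb) as [cb [sb [Hcb [Eb' Eb]]]].
  assert (ca = c0) by (rewrite Ea' in Ra; exact Ra).
  assert (cb = c0) by (rewrite Eb' in Rb; exact Rb). subst ca cb.
  apply (path_sep (fun w => image_E F w /\ Re w = c0) U V (fun y => F (zeta c0 y)) (fun _ => True) sa sb HU HV Hcov Hdis); auto.
  - intros x _. split.
    + exists (zeta c0 x); split; [apply zeta_inE|]; auto.
    + rewrite HF; auto.
  - apply (vpath_ok F Q Hrep HF Hmono Hcs Hcc); auto.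
  - rewrite <- Ea; auto.
  - rewrite <- Eb; auto.
Qed.


Lemma pos_deriv_mono (f : R -> R) :
  (forall x, exists l, 0 < l /\ derivable_pt_lim f x l) -> forall a b, a < b -> f a < f b.
Proof.
  intros H a b Hab.
  set (pr := fun x => let e := constructive_indefinite_description _ (H x) in
              exist (fun l => derivable_pt_lim f x l) (proj1_sig e) (proj2 (proj2_sig e))
              : derivable_pt f x).
  apply (derive_increasing_interv a b f pr Hab); try lra.
  intros x _. unfold pr, derive_pt. simpl.
  destruct (constructive_indefinite_description _ (H x)) as [l [Hl Hd]]. simpl. exact Hl.
Qed.

Definition comb (t : R) (X Y : Cpx) : Cpx := Cadd (Cmul (RtoC t) X) (Cmul (RtoC (1 - t)) Y).

Lemma Cderiv_comb t F1 F2 z L1 L2 : 0 <= t <= 1 ->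
  Cderiv_at F1 z L1 -> Cderiv_at F2 z L2 ->
  Cderiv_at (fun w => comb t (F1 w) (F2 w)) z (comb t L1 L2).
Proof.
  intros Ht H1 H2 e He.
  destruct (H1 (e/4) ltac:(lra)) as [d1 [Hd1 B1]].
  destruct (H2 (e/4) ltac:(lra)) as [d2 [Hd2 B2]].
  exists (Rmin d1 d2); split; [apply Rmin_pos; auto|].
  intros w [Hw0 Hwd].
  assert (Hw1 : 0 < Cnorm (Csub w z) < d1) by (split; auto; eapply Rlt_le_trans; [exact Hwd|apply Rmin_l]).
  assert (Hw2 : 0 < Cnorm (Csub w z) < d2) by (split; auto; eapply Rlt_le_trans; [exact Hwd|apply Rmin_r]).
  specialize (B1 w Hw1). specialize (B2 w Hw2).
  set (D1 := Csub (Cdiv (Csub (F1 w) (F1 z)) (Csub w z)) L1) in *.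
  set (D2 := Csub (Cdiv (Csub (F2 w) (F2 z)) (Csub w z)) L2) in *.
  assert (Hid : Csub (Cdiv (Csub (comb t (F1 w) (F2 w)) (comb t (F1 z) (F2 z))) (Csub w z)) (comb t L1 L2)
     = comb t D1 D2).
  { unfold D1, D2, comb. destruct (F1 w), (F1 z), (F2 w), (F2 z), L1, L2, w, z.
    unfold Csub, Cadd, Copp, Cmul, Cdiv, Cinv, RtoC; simpl. f_equal; ring. }
  rewrite Hid. eapply Rle_lt_trans; [apply Cnorm_le_abs|].
  pose proof (Rabs_fst_le D1); pose proof (Rabs_snd_le D1);
  pose proof (Rabs_fst_le D2); pose proof (Rabs_snd_le D2).
  destruct D1 as [a1 a2], D2 as [b1 b2]; unfold comb, Cadd, Cmul, RtoC; simpl in *.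
  assert (Rabs (t * a1 - 0 * a2 + ((1 - t) * b1 - 0 * b2)) <= Rabs a1 + Rabs b1).
  { replace (t * a1 - 0 * a2 + ((1 - t) * b1 - 0 * b2)) with (t * a1 + (1-t) * b1) by ring.
    eapply Rle_trans; [apply Rabs_triang|]. rewrite !Rabs_mult.
    rewrite (Rabs_right t), (Rabs_right (1-t)) by lra.
    pose proof (Rabs_pos a1); pose proof (Rabs_pos b1). nra. }
  assert (Rabs (t * a2 + 0 * a1 + ((1 - t) * b2 + 0 * b1)) <= Rabs a2 + Rabs b2).
  { replace (t * a2 + 0 * a1 + ((1 - t) * b2 + 0 * b1)) with (t * a2 + (1-t) * b2) by ring.
    eapply Rle_trans; [apply Rabs_triang|]. rewrite !Rabs_mult.
    rewrite (Rabs_right t), (Rabs_right (1-t)) by lra.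
    pose proof (Rabs_pos a2); pose proof (Rabs_pos b2). nra. }
  lra.
Qed.

Theorem corollary2p4 (h1 g1 h2 g2 : Cpx -> Cpx) (t : R) :
  SH_data h1 g1 -> SH_data h2 g2 ->
  (forall z, inE z -> Cadd (h1 z) (g1 z) = Cdiv z (Csub Cone z)) ->
  (forall z, inE z -> Cadd (h2 z) (g2 z) = Cdiv z (Csub Cone z)) ->
  0 <= t <= 1 ->
  let f := fun z => Cadd (Cmul (RtoC t) (Cadd (h1 z) (Cconj (g1 z))))
                         (Cmul (RtoC (1 - t)) (Cadd (h2 z) (Cconj (g2 z)))) in
  in_SH f /\ domain (image_E f) /\ convex_imag_dir (image_E f).
Proof.
  intros [h1' [g1' [HD1 [HS1 [HU1 [HN1 HO1]]]]]] [h2' [g2' [HD2 [HS2 [HU2 [HN2 HO2]]]]]] HP1 HP2 Ht f.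
  assert (Sh1 : shear h1 g1 h1' g1') by (split; [exact HD1|split; [exact HS1|exact HP1]]).
  assert (Sh2 : shear h2 g2 h2' g2') by (split; [exact HD2|split; [exact HS2|exact HP2]]).
  set (Q := fun c s => t * (snd (h1 (zeta c s)) - snd (g1 (zeta c s)))
                     + (1 - t) * (snd (h2 (zeta c s)) - snd (g2 (zeta c s)))).
  assert (HFz : forall z, inE z -> f z = (fst (phi z),
      t * (snd (h1 z) - snd (g1 z)) + (1 - t) * (snd (h2 z) - snd (g2 z)))).
  { intros z Hz. generalize (HP1 z Hz) (HP2 z Hz). unfold f, phi.
    destruct (h1 z) as [a1 a2], (g1 z) as [b1 b2], (h2 z) as [c1 c2], (g2 z) as [d1 d2].
    destruct (Cdiv z (Csub Cone z)) as [p1 p2].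
    unfold Cadd, Cmul, Cconj, RtoC; simpl. intros E1 E2.
    injection E1 as E1 _. injection E2 as E2 _.
    f_equal; [|ring].
    replace a1 with (p1 - b1) by lra. replace c1 with (p1 - d1) by lra. ring. }
  assert (HF : forall c s, -1/2 < c -> f (zeta c s) = (c, Q c s)).
  { intros c s Hc. rewrite HFz by (apply zeta_inE; auto). rewrite phi_zeta by auto. reflexivity. }
  assert (Hrep : forall z, inE z -> exists c s, -1/2 < c /\ z = zeta c s).
  { intros z Hz. destruct (zeta_phi z Hz) as [Hc E]. exists (fst (phi z)), (snd (phi z)); auto. }
  assert (HQd : forall c s, -1/2 < c -> exists l, 0 < l /\ derivable_pt_lim (Q c) s l).
  { intros c s Hc.
    destruct (shear_qderiv _ _ _ _ c s Sh1 Hc) as [l1 [Hl1 D1]].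
    destruct (shear_qderiv _ _ _ _ c s Sh2 Hc) as [l2 [Hl2 D2]].
    exists (t * l1 + (1 - t) * l2). split; [nra|].
    exact (derivable_pt_lim_plus _ _ s _ _ (derivable_pt_lim_scal _ t s _ D1)
                                           (derivable_pt_lim_scal _ (1 - t) s _ D2)). }
  assert (Hmono : forall c, -1/2 < c -> forall s1 s2, s1 < s2 -> Q c s1 < Q c s2).
  { intros c Hc. apply pos_deriv_mono. intro x. apply HQd; auto. }
  assert (Hcs : forall c, -1/2 < c -> continuity (Q c)).
  { intros c Hc x. destruct (HQd c x Hc) as [l [_ D]]. apply derivable_continuous_pt. exists l; exact D. }
  assert (Hcc : forall c s, -1/2 < c -> continuity_pt (fun x => Q x s) c).
  { intros c s Hc.
    pose proof (shear_ccont _ _ _ _ c s Sh1 Hc) as C1.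
    pose proof (shear_ccont _ _ _ _ c s Sh2 Hc) as C2.
    exact (continuity_pt_plus _ _ c (continuity_pt_scal _ t c C1) (continuity_pt_scal _ (1 - t) c C2)). }
  assert (Hid : forall z, f z = Cadd (comb t (h1 z) (h2 z)) (Cconj (comb t (g1 z) (g2 z)))).
  { intro z. unfold f, comb. destruct (h1 z), (g1 z), (h2 z), (g2 z).
    unfold Cadd, Cmul, Cconj, RtoC; simpl. f_equal; ring. }
  split; [|split; [split; [apply (img_open f Q); auto| apply (img_conn f Q); auto]|apply (img_vert f Q); auto]].
  exists (fun z => comb t (h1 z) (h2 z)), (fun z => comb t (g1 z) (g2 z)).
  split; [|intros z _; apply Hid].
  exists (fun z => comb t (h1' z) (h2' z)), (fun z => comb t (g1' z) (g2' z)).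
  split; [|split; [|split; [|split]]].
  - intros z Hz. destruct (HD1 z Hz), (HD2 z Hz).
    split; apply Cderiv_comb; auto.
  - intros z Hz. destruct (zeta_phi z Hz) as [Hc Ez].
    set (c := fst (phi z)) in *. set (s := snd (phi z)) in *.
    pose proof (shear_ab _ _ _ _ c s Sh1 Hc) as [A1 [A2 A3]].
    pose proof (shear_ab _ _ _ _ c s Sh2 Hc) as [B1 [B2 B3]].
    rewrite Ez in A1, A2, A3, B1, B2, B3.
    set (V := Vs c s) in *.
    set (A := Cmul (comb t (h1' z) (h2' z)) V).
    set (B := Cmul (comb t (g1' z) (g2' z)) V).
    assert (EA : A = comb t (Cmul (h1' z) V) (Cmul (h2' z) V)).
    { unfold A, comb. destruct (h1' z), (h2' z), V; unfold Cadd, Cmul, RtoC; simpl; f_equal; ring. }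
    assert (EB : B = comb t (Cmul (g1' z) V) (Cmul (g2' z) V)).
    { unfold B, comb. destruct (g1' z), (g2' z), V; unfold Cadd, Cmul, RtoC; simpl; f_equal; ring. }
    assert (FA : fst A + fst B = 0 /\ snd A + snd B = 1 /\ 1/2 < snd A).
    { rewrite EA, EB. revert A1 A2 A3 B1 B2 B3.
      destruct (Cmul (h1' z) V) as [a1 a2], (Cmul (h2' z) V) as [c1 c2], (Cmul (g1' z) V) as [b1 b2], (Cmul (g2' z) V) as [d1 d2].
      unfold comb, Cadd, Cmul, RtoC; simpl. intros.
      split; [replace b1 with (-a1) by lra; replace d1 with (-c1) by lra; ring
             | split; [replace b2 with (1-a2) by lra; replace d2 with (1 - c2) by lra; ring | assert (0 <= t*(a2-1/2)) by (apply Rmult_le_pos; lra); assert (0 <= (1-t)*(c2-1/2)) by (apply Rmult_le_pos; lra); nra]]. }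
    destruct FA as [F1 [F2 F3]].
    assert (Hnz : comb t (h1' z) (h2' z) <> Czero).
    { intro E. unfold A in F3. rewrite E in F3. destruct V; unfold Cmul, Czero in F3; simpl in F3. lra. }
    split; auto.
    assert (Hb : B = Cmul (Cdiv (comb t (g1' z) (g2' z)) (comb t (h1' z) (h2' z))) A).
    { unfold A, B. rewrite div_mul_id; auto. }
    assert (HA : 0 < Cnorm A) by (apply Cnorm_pos_iff; nra).
    assert (Hlt : Cnorm B < Cnorm A).
    { apply Cnorm_sq_lt. assert (fst B = - fst A) by lra. assert (snd B = 1 - snd A) by lra.
      rewrite H, H0. nra. }
    rewrite Hb, Cnorm_mul in Hlt.
    pose proof (Cnorm_ge0 (Cdiv (comb t (g1' z) (g2' z)) (comb t (h1' z) (h2' z)))). nra.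
  - intros z w Hz Hw E. rewrite <- !Hid in E. apply (img_inj f Q Hrep HF Hmono); auto.
  - rewrite <- Hid. unfold f. rewrite HN1, HN2. unfold Cadd, Cmul, RtoC, Czero; simpl; f_equal; ring.
  - unfold comb. rewrite HO1, HO2. unfold Cadd, Cmul, RtoC, Cone; simpl; f_equal; ring.
Qed.
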